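(* Let $\theta$ be the logarithmic mean and let $z=(z_1,z_2)\in\mathbb{R}^2$. If $\min\{z_1,z_2\}\le0$ then $z\notin\partial^+\theta(0)$. Otherwise there is a unique $q_1\in(0,\infty)$ with $\partial_1\theta(q_1^{-1/2},q_1^{1/2})=z_1$, and $z\in\partial^+\theta(0)$ if and only if $z_2\ge\partial_2\theta(q_1^{-1/2},q_1^{1/2})$.
   Context: The logarithmic mean $\theta:[0,\infty)^2\to[0,\infty)$ is $\theta(s,t)=0$ if $s=0$ or $t=0$, $\theta(s,s)=s$, and $\theta(s,t)=\frac{t-s}{\log t-\log s}$ otherwise; it is regarded as a concave function $\mathbb{R}^2\to\mathbb{R}\cup\{-\infty\}$ with $\theta(s,t)=-\infty$ if $\min\{s,t\}<0$. The super-differential is $\partial^+\theta(x)=\{r\in\mathbb{R}^2:\theta(y)\le\theta(x)+\langle r,y-x\rangle\ \forall y\in\mathbb{R}^2\}$. *)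

(* Defs.v *)
From Stdlib Require Import Reals.
From Coquelicot Require Import Coquelicot.
Open Scope R_scope.

(* Logarithmic mean on [0,oo)^2 (its real values; only used for s,t >= 0). *)
Definition logmean (s t : R) : R :=
  if Req_EM_T s 0 then 0
  else if Req_EM_T t 0 then 0
  else if Req_EM_T s t then s
  else (t - s) / (ln t - ln s).

(* theta regarded as a concave function R^2 -> R \cup {-oo}. *)
Definition theta (x : R * R) : Rbar :=
  if Rlt_dec (Rmin (fst x) (snd x)) 0 then m_infty
  else Finite (logmean (fst x) (snd x)).

Definition superdiff (f : R * R -> Rbar) (x : R * R) (r : R * R) : Prop :=
  forall y : R * R,
    Rbar_le (f y)
      (Rbar_plus (f x)
         (Finite (fst r * (fst y - fst x) + snd r * (snd y - snd x)))).

Definition d1theta (a b : R) : R := Derive (fun s => logmean s b) a.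
Definition d2theta (a b : R) : R := Derive (fun t => logmean a t) b.

(* Main.v *)
Require Import Defs.
From Stdlib Require Import Reals Lra Factorial.
From Coquelicot Require Import Coquelicot.
Open Scope R_scope.

Definition expc (n : nat) : R := / INR (Factorial.fact n).
Definition cps : nat -> R := PS_decr_1 expc.
Definition psi (w : R) : R := PSeries cps w.
Definition psi1 (w : R) : R := PSeries (PS_derive cps) w.
Definition psi2 (w : R) : R := PSeries (PS_derive (PS_derive cps)) w.

Lemma dmult (f g : R -> R) x df dg : is_derive f x df -> is_derive g x dg ->
  is_derive (fun t => f t * g t) x (df * g x + f x * dg).
Proof. intros H1 H2. exact (@is_derive_mult R_AbsRing f g x df dg H1 H2 Rmult_comm). Qed.
Lemma dplus (f g : R -> R) x df dg : is_derive f x df -> is_derive g x dg ->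
  is_derive (fun t => f t + g t) x (df + dg).
Proof. intros H1 H2. exact (@is_derive_plus R_AbsRing _ f g x df dg H1 H2). Qed.
Lemma dminus (f g : R -> R) x df dg : is_derive f x df -> is_derive g x dg ->
  is_derive (fun t => f t - g t) x (df - dg).
Proof. intros H1 H2. exact (@is_derive_minus R_AbsRing _ f g x df dg H1 H2). Qed.
Lemma dcomp (f g : R -> R) x df dg : is_derive f (g x) df -> is_derive g x dg ->
  is_derive (fun t => f (g t)) x (dg * df).
Proof. intros H1 H2. exact (@is_derive_comp R_AbsRing _ f g x df dg H1 H2). Qed.
Lemma did x : is_derive (fun t : R => t) x 1.
Proof. exact (@is_derive_id R_AbsRing x). Qed.
Lemma dconst (c : R) x : is_derive (fun _ : R => c) x 0.
Proof. exact (@is_derive_const R_AbsRing _ c x). Qed.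

Lemma CV_expc : CV_radius expc = p_infty.
Proof.
  apply CV_radius_infinite_DAlembert.
  - intro n; unfold expc; apply Rinv_neq_0_compat, not_0_INR, fact_neq_0.
  - apply is_lim_seq_ext with (u := fun n => / INR (S n)).
    + intro n; unfold expc. rewrite fact_simpl, mult_INR.
      assert (H1 : 0 < INR (Factorial.fact n)) by apply lt_0_INR, lt_O_fact.
      assert (H2 : 0 < INR (S n)) by apply lt_0_INR, Nat.lt_0_succ.
      replace (/ (INR (S n) * INR (fact n)) / / INR (fact n)) with (/ INR (S n)) by (field; lra).
      rewrite Rabs_pos_eq; [reflexivity|]. apply Rlt_le, RIneq.Rinv_0_lt_compat; lra.
    + replace (Finite 0) with (Rbar_inv p_infty) by reflexivity.
      apply is_lim_seq_inv; [|discriminate].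
      apply (is_lim_seq_incr_1 INR). apply is_lim_seq_INR.
Qed.

Lemma CV_cps : CV_radius cps = p_infty.
Proof. unfold cps; rewrite CV_radius_decr_1; apply CV_expc. Qed.

Lemma psi_d (w : R) : is_derive psi w (psi1 w).
Proof. apply is_derive_PSeries. rewrite CV_cps. exact I. Qed.

Lemma psi1_d (w : R) : is_derive psi1 w (psi2 w).
Proof. apply is_derive_PSeries. rewrite CV_radius_derive, CV_cps. exact I. Qed.

Lemma R0 (w : R) : w * psi w = exp w - 1.
Proof.
  rewrite exp_Reals, PSeries_decr_1.
  - unfold psi, cps, expc; simpl. field.
  - apply CV_radius_inside. pose proof CV_expc as E; unfold expc in E; rewrite E. exact I.
Qed.

Lemma psi0 : psi 0 = 1.
Proof. unfold psi; rewrite PSeries_0. unfold cps, PS_decr_1, expc; simpl. field. Qed.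

Lemma R1 (w : R) : psi w + w * psi1 w = exp w.
Proof.
  assert (H1 : is_derive (fun t => t * psi t) w (1 * psi w + w * psi1 w)).
  { apply (dmult (fun t => t) psi). apply did. apply psi_d. }
  assert (H2 : is_derive (fun t => t * psi t) w (exp w - 0)).
  { apply is_derive_ext with (f := fun t => exp t - 1). intro t; rewrite R0; auto.
    apply dminus. apply is_derive_exp. apply dconst. }
  apply is_derive_unique in H1; apply is_derive_unique in H2. rewrite H1 in H2. lra.
Qed.

Lemma R2 (w : R) : 2 * psi1 w + w * psi2 w = exp w.
Proof.
  assert (H1 : is_derive (fun t => psi t + t * psi1 t) w (psi1 w + (1 * psi1 w + w * psi2 w))).
  { apply (dplus psi). apply psi_d.
    apply (dmult (fun t => t) psi1). apply did. apply psi1_d. }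
  assert (H2 : is_derive (fun t => psi t + t * psi1 t) w (exp w)).
  { apply is_derive_ext with (f := exp). intro t; rewrite R1; auto.
    apply is_derive_exp. }
  apply is_derive_unique in H1; apply is_derive_unique in H2. rewrite H1 in H2. lra.
Qed.

Lemma incr_aux (f f' : R -> R) (Hd : forall x, is_derive f x (f' x))
  (a b : R) : a < b -> (forall c, a < c < b -> 0 < f' c) -> f a < f b.
Proof.
  intros Hab Hp.
  destruct (MVT_cor2 f f' a b Hab) as [c [Hc1 Hc2]].
  { intros c _. apply is_derive_Reals, Hd. }
  specialize (Hp c Hc2). nra.
Qed.

Lemma incr0 (f f' : R -> R) : (forall x, is_derive f x (f' x)) ->
  (forall x, x <> 0 -> 0 < f' x) -> forall x y, x < y -> f x < f y.
Proof.
  intros Hd Hp x y Hxy.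
  destruct (Rle_lt_dec 0 x) as [Hx|Hx].
  - apply (incr_aux f f' Hd); auto. intros c Hc; apply Hp; lra.
  - destruct (Rle_lt_dec y 0) as [Hy|Hy].
    + apply (incr_aux f f' Hd); auto. intros c Hc; apply Hp; lra.
    + apply Rlt_trans with (f 0).
      * apply (incr_aux f f' Hd); auto. intros c Hc; apply Hp; lra.
      * apply (incr_aux f f' Hd); auto. intros c Hc; apply Hp; lra.
Qed.

Definition pfun (w : R) : R := (w - 2) * exp w + w + 2.

Lemma pfun_d w : is_derive pfun w ((w - 1) * exp w + 1).
Proof.
  unfold pfun.
  assert (H := dplus (fun t => (t - 2) * exp t + t) (fun _ => 2) w _ _
    (dplus (fun t => (t - 2) * exp t) (fun t => t) w _ _
      (dmult (fun t => t - 2) exp w _ _ (dminus (fun t => t) (fun _ => 2) w _ _ (did w) (dconst 2 w)) (is_derive_exp w))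
      (did w)) (dconst 2 w)).
  simpl in H. replace ((w - 1) * exp w + 1) with ((1 - 0) * exp w + (w - 2) * exp w + 1 + 0) by ring.
  exact H.
Qed.

Lemma pfun_d_pos w : w <> 0 -> 0 < (w - 1) * exp w + 1.
Proof.
  intro Hw. assert (H := exp_ineq1 (- w) ltac:(lra)).
  assert (He : exp (- w) * exp w = 1) by (rewrite <- exp_plus; replace (-w + w) with 0 by ring; apply exp_0).
  assert (Hp := exp_pos w). nra.
Qed.

Lemma pfun_sign w : (0 < w -> 0 < pfun w) /\ (w < 0 -> pfun w < 0).
Proof.
  assert (H0 : pfun 0 = 0) by (unfold pfun; rewrite exp_0; ring).
  split; intro Hw.
  - rewrite <- H0. apply (incr0 pfun _ pfun_d pfun_d_pos); lra.
  - rewrite <- H0. apply (incr0 pfun _ pfun_d pfun_d_pos); lra.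
Qed.

Lemma m_pos w : w <> 0 -> 0 < psi1 w - psi2 w.
Proof.
  intro Hw.
  assert (e0 := R0 w). assert (e1 := R1 w). assert (e2 := R2 w).
  assert (Hid : w ^ 3 * (psi1 w - psi2 w) = pfun w).
  { unfold pfun.
    assert (h2 : w^2 * (w * psi2 w) = w^2 * (exp w - 2 * psi1 w)) by (rewrite <- e2; ring).
    assert (h1 : (w^2 + 2*w) * (w * psi1 w) = (w^2 + 2*w) * (exp w - psi w)) by (rewrite <- e1; ring).
    assert (h0 : (w + 2) * (w * psi w) = (w + 2) * (exp w - 1)) by (rewrite e0; ring).
    nra. }
  destruct (pfun_sign w) as [Hs1 Hs2].
  destruct (Rlt_or_le 0 w) as [Hp|Hn].
  - assert (0 < w ^ 3) by (apply pow_lt; lra). specialize (Hs1 Hp). nra.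
  - assert (Hn' : w < 0) by lra. assert (0 < (- w) ^ 3) by (apply pow_lt; lra).
    specialize (Hs2 Hn'). assert ((- w) ^ 3 = - w ^ 3) by ring. nra.
Qed.

Definition D1 (u : R) : R := psi u - psi1 u.

Lemma D1_d u : is_derive D1 u (psi1 u - psi2 u).
Proof. unfold D1. apply (dminus psi psi1 u _ _ (psi_d u) (psi1_d u)). Qed.

Lemma D1_incr x y : x < y -> D1 x < D1 y.
Proof. apply (incr0 D1 _ D1_d m_pos). Qed.

Definition nk (v : R) : R := - (exp (- v) * psi1 v).

Lemma nk_d v : is_derive nk v (exp (- v) * (psi1 v - psi2 v)).
Proof.
  unfold nk.
  assert (He : is_derive (fun t => exp (- t)) v (-1 * exp (- v))).
  { apply (dcomp exp (fun t => - t)). apply is_derive_exp.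
    assert (H := dminus (fun _ => 0) (fun t => t) v _ _ (dconst 0 v) (did v)).
    simpl in H. apply is_derive_ext with (f := fun t => 0 - t). intro t; change (0 - t = - t :> R); ring.
    replace (-1) with (0 - 1) by ring. exact H. }
  assert (H := dminus (fun _ => 0) (fun t => exp (- t) * psi1 t) v _ _ (dconst 0 v)
     (dmult (fun t => exp (- t)) psi1 v _ _ He (psi1_d v))).
  apply is_derive_ext with (f := fun t => 0 - exp (- t) * psi1 t). intro t; change (0 - exp (- t) * psi1 t = - (exp (- t) * psi1 t) :> R); ring.
  replace (exp (- v) * (psi1 v - psi2 v)) with (0 - (-1 * exp (- v) * psi1 v + exp (- v) * psi2 v)) by ring.
  exact H.
Qed.

Lemma nk_incr x y : x < y -> nk x < nk y.
Proof.
  apply (incr0 nk _ nk_d). intros w Hw. apply Rmult_lt_0_compat. apply exp_pos. apply m_pos; auto.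
Qed.

Lemma tangent u v : psi v <= psi u - psi1 u + psi1 u * exp (v - u).
Proof.
  set (G := fun t => psi u + psi1 u * (exp (t - u) - 1) - psi t).
  assert (HG : forall t, is_derive G t (psi1 u * exp (t - u) - psi1 t)).
  { intro t. unfold G.
    assert (He : is_derive (fun s => exp (s - u)) t (1 * exp (t - u))).
    { apply (dcomp exp (fun s => s - u)). apply is_derive_exp.
      replace 1 with (1 - 0) by ring. apply (dminus (fun s => s) (fun _ => u)). apply did. apply dconst. }
    assert (H := dminus _ psi t _ _ (dplus (fun _ => psi u) (fun s => psi1 u * (exp (s - u) - 1)) t _ _ (dconst _ t)
       (dmult (fun _ => psi1 u) (fun s => exp (s - u) - 1) t _ _ (dconst _ t)
          (dminus _ (fun _ => 1) t _ _ He (dconst 1 t)))) (psi_d t)).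
    simpl in H. replace (psi1 u * exp (t - u) - psi1 t) with
      (0 + (0 * (exp (t - u) - 1) + psi1 u * (1 * exp (t - u) - 0)) - psi1 t) by ring.
    exact H. }
  assert (HG0 : G u = 0) by (unfold G; replace (u - u) with 0 by ring; rewrite exp_0; ring).
  assert (Hk : forall t, psi1 u * exp (t - u) - psi1 t = exp t * (nk t - nk u)).
  { intro t. unfold nk. replace (t - u) with (t + - u) by ring. rewrite exp_plus.
    assert (exp t * exp (- t) = 1) by (rewrite <- exp_plus; replace (t + - t) with 0 by ring; apply exp_0).
    replace (exp t * (- (exp (- t) * psi1 t) - - (exp (- u) * psi1 u))) with
      (exp (- u) * psi1 u * exp t - (exp t * exp (- t)) * psi1 t) by ring.
    rewrite H. ring. }
  cut (0 <= G v). { unfold G. intro. nra. }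
  destruct (Rtotal_order u v) as [Huv|[Huv|Huv]].
  - destruct (MVT_cor2 G (fun t => psi1 u * exp (t - u) - psi1 t) u v Huv) as [c [Hc1 Hc2]].
    { intros c _. apply is_derive_Reals, HG. }
    rewrite Hk, HG0 in Hc1. assert (nk u < nk c) by (apply nk_incr; lra).
    assert (0 < exp c) by apply exp_pos.
    assert (0 < exp c * (nk c - nk u)) by (apply Rmult_lt_0_compat; lra). nra.
  - subst; lra.
  - destruct (MVT_cor2 G (fun t => psi1 u * exp (t - u) - psi1 t) v u Huv) as [c [Hc1 Hc2]].
    { intros c _. apply is_derive_Reals, HG. }
    rewrite Hk, HG0 in Hc1. assert (nk c < nk u) by (apply nk_incr; lra).
    assert (0 < exp c) by apply exp_pos.
    assert (0 < exp c * (nk u - nk c)) by (apply Rmult_lt_0_compat; lra). nra.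
Qed.

Lemma ln_inj_ne a b : 0 < a -> 0 < b -> a <> b -> ln b - ln a <> 0.
Proof.
  intros Ha Hb Hne Heq. apply Hne. rewrite <- (exp_ln a Ha), <- (exp_ln b Hb).
  f_equal. lra.
Qed.

Lemma exp_lndiff a b : 0 < a -> 0 < b -> exp (ln b - ln a) = b / a.
Proof.
  intros Ha Hb. unfold Rminus. rewrite exp_plus, exp_Ropp, !exp_ln; auto.
Qed.

Lemma lm_psi s b : 0 < s -> 0 < b -> logmean s b = s * psi (ln b - ln s).
Proof.
  intros Hs Hb. unfold logmean.
  destruct (Req_EM_T s 0) as [e|_]; [lra|].
  destruct (Req_EM_T b 0) as [e|_]; [lra|].
  destruct (Req_EM_T s b) as [e|ne].
  - subst. replace (ln b - ln b) with 0 by ring. rewrite psi0. ring.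
  - assert (Hw := ln_inj_ne s b Hs Hb ne).
    assert (H0 := R0 (ln b - ln s)). rewrite exp_lndiff in H0; auto.
    assert (psi (ln b - ln s) = (b / s - 1) / (ln b - ln s)).
    { apply (Rmult_eq_reg_l (ln b - ln s)); auto. rewrite H0. field; lra. }
    rewrite H. field. split; lra.
Qed.

Lemma lm_psi2 a t : 0 < a -> 0 < t -> logmean a t = a * psi (ln t - ln a).
Proof. apply lm_psi. Qed.

Lemma d1theta_eq a b : 0 < a -> 0 < b -> d1theta a b = D1 (ln b - ln a).
Proof.
  intros Ha Hb. unfold d1theta. apply is_derive_unique.
  apply is_derive_ext_loc with (f := fun s => s * psi (ln b - ln s)).
  { generalize (open_gt 0 a Ha). apply filter_imp. intros s Hs. symmetry. apply lm_psi; auto. }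
  assert (Hi : is_derive (fun s => ln b - ln s) a (0 - / a)).
  { apply dminus. apply dconst. apply is_derive_ln; auto. }
  assert (H := dmult (fun s => s) (fun s => psi (ln b - ln s)) a _ _ (did a)
     (dcomp psi (fun s => ln b - ln s) a _ _ (psi_d _) Hi)).
  unfold D1. replace (psi (ln b - ln a) - psi1 (ln b - ln a)) with
    (1 * psi (ln b - ln a) + a * ((0 - / a) * psi1 (ln b - ln a))) by (field; lra).
  exact H.
Qed.

Lemma d2theta_eq a b : 0 < a -> 0 < b -> d2theta a b = a / b * psi1 (ln b - ln a).
Proof.
  intros Ha Hb. unfold d2theta. apply is_derive_unique.
  apply is_derive_ext_loc with (f := fun t => a * psi (ln t - ln a)).
  { generalize (open_gt 0 b Hb). apply filter_imp. intros t Ht. symmetry. apply lm_psi; auto. }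
  assert (Hi : is_derive (fun t => ln t - ln a) b (/ b - 0)).
  { apply dminus. apply is_derive_ln; auto. apply dconst. }
  assert (H := dmult (fun _ => a) (fun t => psi (ln t - ln a)) b _ _ (dconst a b)
     (dcomp psi (fun t => ln t - ln a) b _ _ (psi_d _) Hi)).
  replace (a / b * psi1 (ln b - ln a)) with
    (0 * psi (ln b - ln a) + a * ((/ b - 0) * psi1 (ln b - ln a))) by (field; lra).
  exact H.
Qed.

Lemma lnq q : 0 < q -> ln (sqrt q) - ln (/ sqrt q) = ln q.
Proof.
  intro Hq. assert (Hs : 0 < sqrt q) by (apply sqrt_lt_R0; auto).
  rewrite ln_Rinv; auto.
  rewrite <- (sqrt_sqrt q) at 3 by lra. rewrite ln_mult; auto. ring.
Qed.

Lemma lm_0l t : logmean 0 t = 0.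
Proof. unfold logmean. destruct (Req_EM_T 0 0); [reflexivity|lra]. Qed.

Lemma lm_0r s : logmean s 0 = 0.
Proof. unfold logmean. destruct (Req_EM_T s 0); [reflexivity|].
  destruct (Req_EM_T 0 0); [reflexivity|lra]. Qed.

Lemma sd_iff z1 z2 : superdiff theta (0, 0) (z1, z2) <->
  (forall s t, 0 <= s -> 0 <= t -> logmean s t <= z1 * s + z2 * t).
Proof.
  unfold superdiff, theta. simpl.
  destruct (Rlt_dec (Rmin 0 0) 0) as [h|_].
  { rewrite Rmin_left in h; lra. }
  rewrite lm_0l. split.
  - intros H s t Hs Ht. specialize (H (s, t)). simpl in H.
    destruct (Rlt_dec (Rmin s t) 0) as [h|_].
    { exfalso. unfold Rmin in h; destruct (Rle_dec s t); lra. }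
    simpl in H. lra.
  - intros H [s t]. simpl.
    destruct (Rlt_dec (Rmin s t) 0) as [h|h]. { simpl. trivial. }
    simpl. assert (0 <= s /\ 0 <= t) as [Hs Ht].
    { unfold Rmin in h; destruct (Rle_dec s t); lra. }
    specialize (H s t Hs Ht). lra.
Qed.

Lemma cube_bound v : 0 < v -> (1 + v / 3) ^ 3 <= exp v.
Proof.
  intro Hv. assert (E : exp v = exp (v / 3) ^ 3).
  { simpl. rewrite Rmult_1_r, <- !exp_plus. f_equal. field. }
  rewrite E. assert (H := exp_ineq1_le (v / 3)).
  apply pow_incr. lra.
Qed.

Lemma big v : 0 < v -> 1 + v / 3 <= psi v /\ 1 + v / 3 <= exp v * psi (- v).
Proof.
  intro Hv. assert (H := cube_bound v Hv).
  assert (e0 := R0 v). assert (e0' := R0 (- v)).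
  assert (He : exp v * exp (- v) = 1) by (rewrite <- exp_plus; replace (v + - v) with 0 by ring; apply exp_0).
  assert (Hc : v + v ^ 2 / 3 <= exp v - 1) by nra.
  split.
  - apply (Rmult_le_reg_l v); auto. rewrite e0. nra.
  - apply (Rmult_le_reg_l v); auto.
    replace (v * (exp v * psi (- v))) with (- exp v * (- v * psi (- v))) by ring.
    rewrite e0'. nra.
Qed.

Lemma D1_form u : u ^ 2 * D1 u = exp u - u - 1.
Proof.
  unfold D1. assert (e0 := R0 u). assert (e1 := R1 u).
  replace (u ^ 2 * (psi u - psi1 u)) with (u * (u * psi u) - u * (u * psi1 u)) by ring.
  replace (u * psi1 u) with (exp u - psi u) by lra.
  replace (u * (u * psi u) - u * (exp u - psi u)) with ((u + 1) * (u * psi u) - u * exp u) by ring.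
  rewrite e0. ring.
Qed.

Lemma D1_cont z : continuity (fun u => D1 u - z).
Proof.
  intro x. apply continuity_pt_filterlim.
  assert (H : ex_derive (fun u => D1 u - z) x).
  { exists (psi1 x - psi2 x - 0).
    exact (dminus D1 (fun _ => z) x _ _ (D1_d x) (dconst z x)). }
  exact (ex_derive_continuous _ _ H).
Qed.

Lemma D1_surj z : 0 < z -> exists u, D1 u = z.
Proof.
  intro Hz.
  set (ul := - / z - 1). set (uh := 27 * z + 27).
  assert (Hul : ul < 0). { unfold ul. assert (0 < / z) by (apply RIneq.Rinv_0_lt_compat; auto). lra. }
  assert (Huh : 0 < uh) by (unfold uh; lra).
  assert (Lo : D1 ul < z).
  { assert (F := D1_form ul).
    assert (exp ul < 1) by (rewrite <- exp_0; apply exp_increasing; auto).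
    assert (Hq : ul * z + 1 = - z) by (unfold ul; field; lra).
    destruct (Rlt_or_le (D1 ul) z) as [h|h]; auto. exfalso.
    assert (ul ^ 2 * z <= ul ^ 2 * D1 ul) by (apply Rmult_le_compat_l; [simpl; nra|lra]).
    assert (ul ^ 2 * z + ul = ul * (- z)) by (rewrite <- Hq; ring).
    assert (0 < ul * (- z)) by (replace (ul * (- z)) with ((- ul) * z) by ring; apply Rmult_lt_0_compat; lra). lra. }
  assert (Hi : z < D1 uh).
  { assert (F := D1_form uh). assert (Hc := cube_bound uh Huh).
    assert (0 < uh ^ 2) by (apply pow_lt; lra).
    apply (Rmult_lt_reg_l (uh ^ 2)); auto. rewrite F.
    unfold uh in *. nra. }
  destruct (IVT (fun u => D1 u - z) ul uh (D1_cont z) ltac:(lra) ltac:(simpl; lra) ltac:(simpl; lra))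
    as [u [_ Hu]].
  exists u. simpl in Hu. lra.
Qed.


Lemma D1_inj x y : D1 x = D1 y -> x = y.
Proof.
  intro H. destruct (Rtotal_order x y) as [h|[h|h]]; auto.
  - apply D1_incr in h; lra.
  - apply D1_incr in h; lra.
Qed.

Theorem lemma4p7 (z1 z2 : R) :
  (Rmin z1 z2 <= 0 -> ~ superdiff theta (0, 0) (z1, z2)) /\
  (0 < Rmin z1 z2 ->
     (exists! q1 : R, 0 < q1 /\ d1theta (/ sqrt q1) (sqrt q1) = z1) /\
     (forall q1 : R, 0 < q1 -> d1theta (/ sqrt q1) (sqrt q1) = z1 ->
        (superdiff theta (0, 0) (z1, z2) <->
         d2theta (/ sqrt q1) (sqrt q1) <= z2))).
Proof.
  assert (Hd1 : forall q, 0 < q -> d1theta (/ sqrt q) (sqrt q) = D1 (ln q)).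
  { intros q Hq. assert (Hs : 0 < sqrt q) by (apply sqrt_lt_R0; auto).
    rewrite d1theta_eq; [rewrite lnq; auto | apply RIneq.Rinv_0_lt_compat; auto | auto]. }
  split.
  - intros Hm Hsd. rewrite sd_iff in Hsd.
    assert (Hc : z1 <= 0 \/ z2 <= 0) by (unfold Rmin in Hm; destruct (Rle_dec z1 z2); lra).
    destruct Hc as [Hc|Hc].
    + set (v := 3 * Rabs z2 + 3).
      assert (Hv : 0 < v) by (unfold v; generalize (Rabs_pos z2); lra).
      destruct (big v Hv) as [_ B].
      assert (H := Hsd (exp v) 1 (Rlt_le _ _ (exp_pos v)) ltac:(lra)).
      rewrite lm_psi in H by (try apply exp_pos; lra).
      rewrite ln_1, ln_exp in H. replace (0 - v) with (- v) in H by ring.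
      assert (z1 * exp v <= 0) by (generalize (exp_pos v); nra).
      assert (1 + v / 3 = Rabs z2 + 2) by (unfold v; field). generalize (Rle_abs z2). lra.
    + set (v := 3 * Rabs z1 + 3).
      assert (Hv : 0 < v) by (unfold v; generalize (Rabs_pos z1); lra).
      destruct (big v Hv) as [B _].
      assert (H := Hsd 1 (exp v) ltac:(lra) (Rlt_le _ _ (exp_pos v))).
      rewrite lm_psi in H by (try apply exp_pos; lra).
      rewrite ln_1, ln_exp in H. replace (v - 0) with v in H by ring.
      assert (z2 * exp v <= 0) by (generalize (exp_pos v); nra).
      assert (1 + v / 3 = Rabs z1 + 2) by (unfold v; field). generalize (Rle_abs z1). lra.
  - intro Hm.
    assert (Hz1 : 0 < z1) by (unfold Rmin in Hm; destruct (Rle_dec z1 z2); lra).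
    assert (Hz2 : 0 < z2) by (unfold Rmin in Hm; destruct (Rle_dec z1 z2); lra).
    split.
    + destruct (D1_surj z1 Hz1) as [u Hu].
      exists (exp u). split.
      * split. apply exp_pos. rewrite Hd1 by apply exp_pos. rewrite ln_exp; auto.
      * intros q [Hq Hq1]. rewrite Hd1 in Hq1 by auto.
        rewrite <- Hu in Hq1. apply D1_inj in Hq1. rewrite <- Hq1. apply exp_ln; auto.
    + intros q Hq Hq1.
      set (a := / sqrt q). set (b := sqrt q).
      assert (Hb : 0 < b) by (apply sqrt_lt_R0; auto).
      assert (Ha : 0 < a) by (apply RIneq.Rinv_0_lt_compat; auto).
      fold a b in Hq1 |- *.
      rewrite d1theta_eq in Hq1 by auto. rewrite d2theta_eq by auto.
      set (w := ln b - ln a) in *. unfold D1 in Hq1.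
      rewrite sd_iff. split.
      * intro H. specialize (H a b (Rlt_le _ _ Ha) (Rlt_le _ _ Hb)).
        rewrite lm_psi in H by auto. fold w in H.
        assert (a * psi1 w <= z2 * b) by nra.
        unfold Rdiv. apply (Rmult_le_reg_r b); auto.
        replace (a * / b * psi1 w * b) with (a * psi1 w) by (field; lra). lra.
      * intros H s t Hs Ht.
        destruct (Req_dec s 0) as [e|Hs0]. { subst. rewrite lm_0l. nra. }
        destruct (Req_dec t 0) as [e|Ht0]. { subst. rewrite lm_0r. nra. }
        assert (Hs' : 0 < s) by lra. assert (Ht' : 0 < t) by lra.
        rewrite lm_psi by auto.
        assert (T := tangent w (ln t - ln s)).
        assert (Ee : exp (ln t - ln s - w) = (t / s) / (b / a)).
        { unfold w. rewrite <- (exp_lndiff s t), <- (exp_lndiff a b) by auto.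
          unfold Rminus at 1. rewrite exp_plus, exp_Ropp. reflexivity. }
        rewrite Ee in T.
        assert (s * psi (ln t - ln s) <= s * (psi w - psi1 w + psi1 w * (t / s / (b / a))))
          by (apply Rmult_le_compat_l; lra).
        replace (s * (psi w - psi1 w + psi1 w * (t / s / (b / a)))) with
          (z1 * s + (a / b * psi1 w) * t) in H0 by (rewrite <- Hq1; field; lra).
        nra.
Qed.
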